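(* $$\lim_{k \to \infty} \sum_{n=0}^{\infty} (-1)^n \frac{1}{n!}\left\langle {n \atop k} \right\rangle = 0,$$ where the limit is over nonnegative integers $k$.
   Context: For integers $n,k\ge 0$, the Eulerian number $\left\langle {n \atop k} \right\rangle$ is the number of permutations of $\{1,\ldots,n\}$ with exactly $k$ ascents (positions $i$ with $\sigma(i)<\sigma(i+1)$), with $\left\langle {0 \atop 0} \right\rangle=1$ and $\left\langle {0 \atop k} \right\rangle=0$ for $k\ge1$; in particular $\left\langle {n \atop k} \right\rangle=0$ when $n<k$. *)

(* Defs.v *)
From mathcomp Require Import all_boot all_fingroup.
Set Implicit Arguments. Unset Strict Implicit. Unset Printing Implicit Defensive.

Definition ascents (n : nat) (s : 'S_n) : nat :=
  #|[set i : 'I_n | [exists j : 'I_n, (val j == i.+1) && (s i < s j)]]|.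

Definition eulerian (n k : nat) : nat :=
  #|[set s : 'S_n | ascents s == k]|.

(* Main.v *)
Require Import Defs.
From Stdlib Require Import Reals Factorial.
From Coquelicot Require Import Coquelicot.
From Stdlib Require Import Lia Lra Psatz.
From Stdlib Require Compare_dec.

Open Scope R_scope.

Ltac toR := match goal with |- ?a = ?b => change (@eq R a b) end.

Definition phi (j : nat) (y : R) : R := y ^ j * exp (- y) / INR (fact j).

Lemma INR_fact_pos j : 0 < INR (fact j).
Proof. apply lt_0_INR, lt_O_fact. Qed.

Lemma fact_S_R j : INR (fact (S j)) = INR (S j) * INR (fact j).
Proof. rewrite <- mult_INR. reflexivity. Qed.

Lemma is_derive_eq (f : R -> R) x l l' : is_derive f x l -> l = l' -> is_derive f x l'.
Proof. intros H <-; exact H. Qed.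

Lemma phi_der_S j c x :
  is_derive (fun x => phi (S j) (x - c)) x (phi j (x - c) - phi (S j) (x - c)).
Proof.
unfold phi.
eapply is_derive_eq.
{ auto_derive; [exact I|reflexivity]. }
change (match j with 0%nat => 1 | S _ => INR j + 1 end) with (INR (S j)).
change (fact j + j * fact j)%nat with (fact (S j)).
rewrite fact_S_R.
assert (H1 := INR_fact_pos j). assert (H2 : 0 < INR (S j)) by (apply lt_0_INR; lia).
match goal with |- ?a = ?b => change (@eq R a b) end.
simpl pow. unfold Rminus. field. split; apply Rgt_not_eq; lra.
Qed.

Lemma phi_der_0 c x :
  is_derive (fun x => phi 0 (x - c)) x (- phi 0 (x - c)).
Proof.
unfold phi.
eapply is_derive_eq.
{ auto_derive; [exact I|reflexivity]. }
match goal with |- ?a = ?b => change (@eq R a b) end.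
simpl. unfold Rminus, Rdiv. rewrite Rinv_1. ring.
Qed.

Definition h (k : nat) (x : R) : R := sum_f_R0 (fun j => phi j (x - INR j)) k.

Lemma h_der k x : is_derive (h (S k)) x (h k (x - 1) - h (S k) x).
Proof.
induction k as [|k IH].
- unfold h; simpl sum_f_R0.
  eapply is_derive_eq.
  { apply (is_derive_plus (fun x => phi 0 (x - INR 0)) (fun x => phi 1 (x - INR 1))).
    apply phi_der_0. apply phi_der_S. }
  simpl INR. unfold plus; simpl. toR.
  replace (x - 1 - 0) with (x - 1) by ring. ring.
- eapply is_derive_eq.
  { apply (is_derive_plus (h (S k)) (fun x => phi (S (S k)) (x - INR (S (S k))))).
    apply IH. apply phi_der_S. }
  unfold plus; simpl. toR.
  change (match k with 0%nat => 1 | S _ => INR k + 1 end) with (INR (S k)).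
  unfold h; simpl sum_f_R0; fold (h k (x - 1)); fold (h k x).
  change (match k with 0%nat => 1 | S _ => INR k + 1 end) with (INR (S k)).
  replace (x - 1 - INR (S k)) with (x - (INR (S k) + 1)) by ring.
  ring.
Qed.

Lemma deriv_nonpos_le (F dF : R -> R) a b : a <= b ->
  (forall y, a <= y <= b -> is_derive F y (dF y)) ->
  (forall y, a <= y <= b -> dF y <= 0) -> F b <= F a.
Proof.
intros ab HD Hn.
assert (Hmin : Rmin a b = a) by (apply Rmin_left; lra).
assert (Hmax : Rmax a b = b) by (apply Rmax_right; lra).
destruct (MVT_gen F a b dF) as [c [Hc E]].
- intros y Hy; simpl in Hy; rewrite Hmin, Hmax in Hy; apply HD; lra.
- intros y Hy; simpl in Hy; rewrite Hmin, Hmax in Hy.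
  apply derivable_continuous_pt.
  exists (dF y); apply is_derive_Reals; apply HD; lra.
- simpl in Hc; rewrite Hmin, Hmax in Hc.
  assert (dF c <= 0) by (apply Hn; lra).
  assert (dF c * (b - a) <= 0).
  { apply Rmult_le_0_r; lra. }
  lra.
Qed.

Definition ce := exp (-1).

Lemma ce_pos : 0 < ce.
Proof. apply exp_pos. Qed.

Lemma ce_lt1 : ce < 1.
Proof. unfold ce; rewrite <- exp_0; apply exp_increasing; lra. Qed.

Lemma fin_bound (ex ea c A B : R) : 0 < ex -> ea >= c * ex -> B <= 0 ->
  ex * A <= ea * B -> A <= c * B.
Proof.
intros H1 H2 H3 H4.
assert (H5 : 0 <= (ea - c * ex) * (- B)) by (apply Rmult_le_pos; lra).
assert (H6 : ex * (c * B - A) >= 0) by nra.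
destruct (Rle_dec A (c * B)) as [|n]; [assumption|].
exfalso. assert (0 < ex * (A - c * B)) by (apply Rmult_lt_0_compat; lra). lra.
Qed.
Lemma sign_aux (e u : R) : 0 < e -> u <= 0 -> e * u <= 0.
Proof. intros; nra. Qed.

Lemma der_aux k m y :
  is_derive (fun t => exp t * (m - h (S k) t)) y (exp y * (m - h k (y - 1))).
Proof.
assert (D := is_derive_mult exp (fun t => minus m (h (S k) t)) y _ _ (is_derive_exp y)
   (is_derive_minus (fun _ => m) (h (S k)) y _ _ (is_derive_const m y) (h_der k y)) Rmult_comm).
eapply is_derive_eq; [exact D|].
change (exp y * (m - h (S k) y) + exp y * (0 - (h k (y - 1) - h (S k) y)) = exp y * (m - h k (y - 1))). ring.
Qed.

Lemma der_aux2 k M y :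
  is_derive (fun t => exp t * (h (S k) t - M)) y (exp y * (h k (y - 1) - M)).
Proof.
assert (D := is_derive_mult exp (fun t => minus (h (S k) t) M) y _ _ (is_derive_exp y)
   (is_derive_minus (h (S k)) (fun _ => M) y _ _ (h_der k y) (is_derive_const M y)) Rmult_comm).
eapply is_derive_eq; [exact D|].
change (exp y * (h (S k) y - M) + exp y * ((h k (y - 1) - h (S k) y) - 0) = exp y * (h k (y - 1) - M)). ring.
Qed.

Lemma h_step k m M :
  (forall y, INR k <= y <= INR k + 1 -> m <= h k y <= M) ->
  forall x, INR k + 1 <= x <= INR k + 2 ->
    m + ce * (h (S k) (INR k + 1) - m) <= h (S k) x <=
    M - ce * (M - h (S k) (INR k + 1)).
Proof.
intros Hb x Hx.
set (a := INR k + 1).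
assert (Ha : h (S k) a = h k a).
{ change (h (S k) a) with (h k a + phi (S k) (a - INR (S k))).
  unfold a, phi; rewrite (S_INR k).
  replace (INR k + 1 - (INR k + 1)) with 0 by ring.
  rewrite pow_ne_zero by lia. unfold Rdiv; ring. }
assert (Hma : m <= h (S k) a <= M) by (rewrite Ha; apply Hb; unfold a; lra).
assert (Eb : exp a >= ce * exp x).
{ unfold ce; rewrite <- exp_plus.
  destruct (Req_dec (-1 + x) a) as [e|ne]; [rewrite e; lra|].
  left; apply exp_increasing; unfold a in *; lra. }
assert (Px := exp_pos x). assert (Pa := exp_pos a). assert (Pc := ce_pos).
split.
-
  assert (HG : exp x * (m - h (S k) x) <= exp a * (m - h (S k) a)).
  { apply (deriv_nonpos_le (fun t => exp t * (m - h (S k) t))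
                           (fun t => exp t * (m - h k (t - 1)))).
    - unfold a in *; lra.
    - intros y Hy. apply der_aux.
    - intros y Hy.
      assert (m <= h k (y - 1)) by (apply Hb; unfold a in *; lra).
      assert (0 < exp y) by apply exp_pos. apply sign_aux; lra. }
  assert (m - h (S k) a <= 0) by lra.
  assert (T := fin_bound _ _ _ _ _ Px Eb H HG). lra.
- assert (HF : exp x * (h (S k) x - M) <= exp a * (h (S k) a - M)).
  { apply (deriv_nonpos_le (fun t => exp t * (h (S k) t - M))
                           (fun t => exp t * (h k (t - 1) - M))).
    - unfold a in *; lra.
    - intros y Hy. apply der_aux2.
    - intros y Hy.
      assert (h k (y - 1) <= M) by (apply Hb; unfold a in *; lra).
      assert (0 < exp y) by apply exp_pos. apply sign_aux; lra. }
  assert (h (S k) a - M <= 0) by lra.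
  assert (T := fin_bound _ _ _ _ _ Px Eb H HF). lra.
Qed.

Lemma h_osc k : exists m M, M - m <= (1 - ce) ^ k /\
  forall y, INR k <= y <= INR k + 1 -> m <= h k y <= M.
Proof.
induction k as [|k [m [M [HmM Hb]]]].
- exists 0, 1; split; [simpl; lra|].
  intros y Hy; simpl in Hy.
  unfold h, phi; simpl. rewrite Rminus_0_r.
  assert (0 < exp (- y)) by apply exp_pos.
  assert (exp (- y) <= 1).
  { rewrite <- exp_0. destruct (Req_dec y 0) as [e|ne].
    - rewrite e, Ropp_0; lra.
    - left; apply exp_increasing; lra. }
  split; unfold Rdiv; rewrite Rinv_1; lra.
- set (a := h (S k) (INR k + 1)).
  exists (m + ce * (a - m)), (M - ce * (M - a)); split.
  + assert (Hc := ce_lt1). assert (Hp := ce_pos).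
    assert (E : M - ce * (M - a) - (m + ce * (a - m)) = (1 - ce) * (M - m)) by ring.
    rewrite E; simpl. apply Rmult_le_compat_l; lra.
  + intros y Hy. rewrite S_INR in Hy. apply h_step; [exact Hb|lra].
Qed.

Definition binR (n k : nat) : R := if (k <=? n)%nat then Binomial.C n k else 0.

Lemma fact_neq0 j : INR (fact j) <> 0.
Proof. apply Rgt_not_eq, INR_fact_pos. Qed.

Lemma binR_n0 n : binR n 0 = 1.
Proof.
unfold binR, Binomial.C; simpl. rewrite Nat.sub_0_r. field. apply fact_neq0.
Qed.

Lemma binR_big n k : (n < k)%nat -> binR n k = 0.
Proof. intros H; unfold binR; destruct (Nat.leb_spec k n); [lia|reflexivity]. Qed.

Lemma binR_nn n : binR n n = 1.
Proof.
unfold binR, Binomial.C; rewrite Nat.leb_refl, Nat.sub_diag; simpl. field. apply fact_neq0.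
Qed.

Lemma binR_pascal n i : binR (S n) (S i) = binR n i + binR n (S i).
Proof.
destruct (Compare_dec.lt_eq_lt_dec i n) as [[lt|eq]|gt].
- unfold binR. rewrite <- pascal by exact lt.
  replace ((S i <=? S n)%nat) with true by (symmetry; apply Nat.leb_le; lia).
  replace ((i <=? n)%nat) with true by (symmetry; apply Nat.leb_le; lia).
  replace ((S i <=? n)%nat) with true by (symmetry; apply Nat.leb_le; lia).
  reflexivity.
- subst i. rewrite !binR_nn, binR_big by lia. ring.
- rewrite !binR_big by lia. ring.
Qed.

Lemma binR_ratio n i : (INR i + 1) * binR n (S i) = (INR n - INR i) * binR n i.
Proof.
destruct (Compare_dec.lt_eq_lt_dec i n) as [[lt|eq]|gt].
- unfold binR, Binomial.C.
  replace ((i <=? n)%nat) with true by (symmetry; apply Nat.leb_le; lia).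
  replace ((S i <=? n)%nat) with true by (symmetry; apply Nat.leb_le; lia).
  replace (n - i)%nat with (S (n - S i)) by lia.
  rewrite !fact_S_R, !S_INR.
  replace (INR (n - S i)) with (INR n - INR i - 1).
  2: { rewrite minus_INR by lia. rewrite S_INR. ring. }
  assert (H1 := fact_neq0 i). assert (H2 := fact_neq0 (n - S i)).
  assert (H3 : INR n - INR i - 1 + 1 <> 0).
  { assert (HH : INR (S i) <= INR n) by (apply le_INR; lia). rewrite S_INR in HH. assert (0 <= INR i) by apply pos_INR. lra. }
  assert (H4 : INR i + 1 <> 0).
  { assert (0 <= INR i) by apply pos_INR. lra. }
  field. split; [exact H2|split; [exact H3|split; [exact H1|exact H4]]].
- subst i. rewrite binR_big by lia. ring.
- rewrite !binR_big by lia. ring.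
Qed.

Lemma binR_fact j m : binR (j + m) j / INR (fact (j + m)) = / (INR (fact j) * INR (fact m)).
Proof.
unfold binR, Binomial.C.
replace ((j <=? j + m)%nat) with true by (symmetry; apply Nat.leb_le; lia).
replace (j + m - j)%nat with m by lia.
assert (H1 := fact_neq0 j). assert (H2 := fact_neq0 m). assert (H3 := fact_neq0 (j + m)).
field. auto.
Qed.

Definition aa (n k : nat) : R :=
  sum_f_R0 (fun j => (-1) ^ j * binR n j * (INR (S k) - INR j) ^ n) k.

Lemma aa_0 k : aa 0 k = 1.
Proof.
unfold aa. simpl pow.
induction k as [|k IH].
- simpl. rewrite binR_n0. ring.
- rewrite tech5. rewrite binR_big by lia.
  rewrite <- IH at 2. ring_simplify.
  apply sum_eq; intros; ring.
Qed.

Lemma aa_n0 n : aa n 0 = 1.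
Proof.
unfold aa; simpl sum_f_R0. rewrite binR_n0.
rewrite Rminus_0_r, pow1. ring.
Qed.

Lemma aa_S n k : aa (S n) (S k) =
  (INR k + 2) * aa n (S k) + (INR n - INR k - 1) * aa n k.
Proof.
unfold aa.
rewrite (decomp_sum _ (S k)) by lia. rewrite (decomp_sum (fun j => (-1) ^ j * binR n j * (INR (S (S k)) - INR j) ^ n) (S k)) by lia.
simpl Nat.pred.
rewrite Rmult_plus_distr_l, Rplus_assoc.
rewrite !scal_sum, <- plus_sum.
assert (Hc : INR (S (S k)) = INR k + 2) by (rewrite !S_INR; ring).
rewrite Hc.
f_equal.
{ rewrite !binR_n0. replace (INR 0) with 0 by reflexivity. rewrite <- tech_pow_Rmult. simpl pow. ring. }
apply sum_eq; intros i Hi.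
assert (Hm : INR k + 2 - INR (S i) = INR (S k) - INR i) by (rewrite !S_INR; ring).
rewrite Hm, binR_pascal.
set (m := INR (S k) - INR i).
assert (Z : (-1) ^ i * m ^ n * ((INR i + 1) * binR n (S i) - (INR n - INR i) * binR n i) = 0)
  by (rewrite binR_ratio; ring).
apply Rminus_diag_uniq. rewrite <- Z.
assert (Hm2 : m = INR k + 1 - INR i) by (unfold m; rewrite S_INR; ring).
rewrite <- tech_pow_Rmult. simpl pow. rewrite Hm2 at 1. ring.
Qed.

Lemma exp_series y : is_series (fun n => y ^ n / INR (fact n)) (exp y).
Proof.
assert (H := is_exp_Reals y). unfold is_pseries in H.
eapply is_series_ext; [|exact H].
intros n; simpl. rewrite pow_n_pow. unfold scal; simpl. unfold mult; simpl. unfold Rdiv. ring.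
Qed.

Lemma is_series_eqlim (a : nat -> R) l l' : is_series a l -> l = l' -> is_series a l'.
Proof. intros H <-; exact H. Qed.

Lemma Lser j y : is_series (fun n => binR n j * y ^ n / INR (fact n))
                           (y ^ j / INR (fact j) * exp y).
Proof.
destruct j as [|j].
- eapply is_series_ext; [|apply (is_series_scal (y ^ 0 / INR (fact 0)) _ _ (exp_series y))].
  intros n; rewrite binR_n0; unfold scal; simpl; unfold mult; simpl. field. apply fact_neq0.
- apply (is_series_decr_n _ (S j)); [lia|].
  assert (Z : sum_n (fun n => binR n (S j) * y ^ n / INR (fact n)) (Init.Nat.pred (S j)) = 0).
  { rewrite sum_n_Reals. simpl Init.Nat.pred.
    rewrite <- (sum_eq (fun _ => 0)). 
    - clear. induction j as [|j IH]; simpl; [ring|]. rewrite IH; ring.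
    - intros i Hi. rewrite binR_big by lia. unfold Rdiv; ring. }
  match goal with |- is_series _ (plus _ (opp ?s)) => replace s with 0 by (symmetry; exact Z) end.
  assert (Eq : forall n, y^(S j)/INR(fact(S j)) * (y^n/INR(fact n)) =
     binR (S j + n) (S j) * y^(S j + n) / INR (fact (S j + n))).
  { intros n. rewrite pow_add.
    replace (binR (S j + n) (S j) * (y ^ S j * y ^ n) / INR (fact (S j + n)))
      with ((binR (S j + n) (S j) / INR (fact (S j + n))) * (y ^ S j * y ^ n))
      by (unfold Rdiv; ring).
    rewrite binR_fact. field. split; apply fact_neq0. }
  eapply is_series_eqlim.
  { eapply is_series_ext; [|apply (is_series_scal (y ^ (S j) / INR (fact (S j))) _ _ (exp_series y))].
  intros n. rewrite <- Eq. reflexivity. }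
  unfold plus, opp, scal; simpl. unfold mult; simpl. toR. ring.
Qed.

Lemma is_series_sum (f : nat -> nat -> R) (l : nat -> R) K :
  (forall j, (j <= K)%nat -> is_series (f j) (l j)) ->
  is_series (fun n => sum_f_R0 (fun j => f j n) K) (sum_f_R0 l K).
Proof.
induction K as [|K IH]; intros H.
- apply H; lia.
- exact (is_series_plus _ _ _ _ (IH (fun j Hj => H j (le_S _ _ Hj))) (H (S K) (le_n _))).
Qed.

Lemma neg_pow c n : (- c) ^ n = (-1) ^ n * c ^ n.
Proof. rewrite <- Rpow_mult_distr. f_equal. ring. Qed.

Lemma aa_series k :
  is_series (fun n => (-1) ^ n / INR (fact n) * aa n k) (h k (INR k + 1)).
Proof.
apply is_series_ext with
  (a := fun n => sum_f_R0 (fun j => (-1) ^ j * (binR n j * (- (INR (S k) - INR j)) ^ n / INR (fact n))) k).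
- intros n. unfold aa. rewrite scal_sum. apply sum_eq; intros j Hj.
  rewrite neg_pow. field. apply fact_neq0.
- eapply is_series_eqlim.
  + apply is_series_sum. intros j Hj.
    exact (is_series_scal ((-1) ^ j) _ _ (Lser j (- (INR (S k) - INR j)))).
  + unfold h. apply sum_eq; intros j Hj. unfold phi, scal; simpl; unfold mult; simpl. toR.
    change (match k with 0%nat => 1 | S _ => INR k + 1 end) with (INR (S k)).
    rewrite S_INR, neg_pow.
    assert (P : (-1) ^ j * (-1) ^ j = 1).
    { rewrite <- Rpow_mult_distr. replace (-1 * -1) with 1 by ring. apply pow1. }
    set (s := (-1) ^ j) in *. set (c := INR k + 1 - INR j).
    transitivity ((s * s) * (c ^ j / INR (fact j) * exp (- c))); [unfold Rdiv; ring|].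
    rewrite P. unfold Rdiv; ring.
Qed.

Section Abstract.
Variable E : nat -> nat -> R.
Hypothesis HE00 : E 0 0 = 1.
Hypothesis HE0S : forall k, E 0 (S k) = 0.
Hypothesis HES0 : forall n, E (S n) 0 = E n 0.
Hypothesis HESS : forall n k,
  E (S n) (S k) = (INR k + 2) * E n (S k) + (INR n - INR k) * E n k.

Definition AE n k := sum_f_R0 (fun i => E n i) k.

Lemma E_n0 n : E n 0 = 1.
Proof. induction n as [|n IH]; [exact HE00|rewrite HES0; exact IH]. Qed.

Lemma AE_0 k : AE 0 k = 1.
Proof.
induction k as [|k IH]; [exact HE00|].
unfold AE in *; rewrite tech5, IH, HE0S; ring.
Qed.

Lemma AE_S n k : AE (S n) (S k) =
  (INR k + 2) * AE n (S k) + (INR n - INR k - 1) * AE n k.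
Proof.
induction k as [|k IH].
- unfold AE; simpl sum_f_R0. rewrite HES0, HESS. simpl INR. ring.
- change (AE (S n) (S (S k))) with (AE (S n) (S k) + E (S n) (S (S k))).
  change (AE n (S (S k))) with (AE n (S k) + E n (S (S k))).
  change (AE n (S k)) with (AE n k + E n (S k)) at 2.
  rewrite IH, HESS. change (AE n (S k)) with (AE n k + E n (S k)).
  rewrite !S_INR. ring.
Qed.

Lemma AE_aa n k : AE n k = aa n k.
Proof.
revert k; induction n as [|n IH]; intros k.
- rewrite AE_0, aa_0; reflexivity.
- destruct k as [|k].
  + unfold AE; simpl sum_f_R0. rewrite E_n0, aa_n0. reflexivity.
  + rewrite AE_S, aa_S, !IH. reflexivity.
Qed.

Definition T k n := (-1) ^ n / INR (fact n) * E n k.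

Definition Sval k := match k with
  | 0%nat => h 0 (INR 0 + 1)
  | S k' => h (S k') (INR (S k') + 1) - h k' (INR k' + 1) end.

Lemma T_series k : is_series (T k) (Sval k).
Proof.
destruct k as [|k].
- eapply is_series_ext; [|apply (aa_series 0)].
  intros n; unfold T. rewrite <- AE_aa. reflexivity.
- eapply is_series_eqlim.
  + eapply is_series_ext; [|exact (is_series_minus _ _ _ _ (aa_series (S k)) (aa_series k))].
    intros n; unfold T. rewrite <- !AE_aa.
    change (AE n (S k)) with (AE n k + E n (S k)).
    unfold plus, opp; simpl. toR. ring.
  + unfold plus, opp; simpl. toR. ring.
Qed.

Lemma h_shift k : h k (INR k + 1) = h (S k) (INR (S k)).
Proof.
change (h (S k) (INR (S k))) with (h k (INR (S k)) + phi (S k) (INR (S k) - INR (S k))).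
rewrite S_INR. unfold phi. replace (INR k + 1 - (INR k + 1)) with 0 by ring.
rewrite pow_ne_zero by lia. unfold Rdiv; ring.
Qed.

Lemma Sval_bound k : Rabs (Sval k) <= (1 - ce) ^ k.
Proof.
destruct k as [|k].
- simpl Sval. unfold h, phi; simpl sum_f_R0.
  assert (H1 := ce_pos). assert (H2 := ce_lt1).
  simpl. replace (- (0 + 1 - 0)) with (-1) by ring. fold ce.
  rewrite Rabs_pos_eq; unfold Rdiv; rewrite Rinv_1; lra.
- destruct (h_osc (S k)) as [m [M [HmM Hb]]].
  change (Sval (S k)) with (h (S k) (INR (S k) + 1) - h k (INR k + 1)). rewrite (h_shift k).
  assert (B1 := Hb (INR (S k) + 1) ltac:(lra)).
  assert (B2 := Hb (INR (S k)) ltac:(lra)).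
  unfold Rabs; destruct (Rcase_abs _); lra.
Qed.

Theorem abstract_main :
  (forall k, ex_series (T k)) /\ is_lim_seq (fun k => Series (T k)) 0.
Proof.
split.
- intros k; exists (Sval k); apply T_series.
- apply is_lim_seq_abs_0.
  apply is_lim_seq_le_le with (u := fun _ => 0) (w := fun k => (1 - ce) ^ k).
  + intros n; split; [apply Rabs_pos|].
    rewrite (is_series_unique _ _ (T_series n)). apply Sval_bound.
  + apply is_lim_seq_const.
  + apply is_lim_seq_geom. assert (H1 := ce_pos). assert (H2 := ce_lt1).
    rewrite Rabs_pos_eq; lra.
Qed.

End Abstract.

Close Scope R_scope.

From mathcomp Require Import all_boot all_fingroup.
From mathcomp Require Import zify.
Set Implicit Arguments. Unset Strict Implicit. Unset Printing Implicit Defensive.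
Open Scope nat_scope.

Fixpoint asc (l : seq nat) : nat :=
  match l with
  | [::] => 0
  | x :: t => (if t is y :: _ then x < y else false) + asc t
  end.

Definition ins (i M : nat) (l : seq nat) := take i l ++ M :: drop i l.

Lemma ins0 M l : ins 0 M l = M :: l.
Proof. by rewrite /ins take0 drop0. Qed.

Lemma insS i M x l : ins i.+1 M (x :: l) = x :: ins i M l.
Proof. by []. Qed.

Lemma ins_nil i M : ins i M [::] = [:: M].
Proof. by case: i. Qed.

Lemma asc_ins_bound M l i : all (fun x => x < M) l ->
  asc l <= asc (ins i M l) <= (asc l).+1.
Proof.
elim: l i => [|x t IH] i; first by rewrite ins_nil.
move=> /= /andP[xM aM].
case: i => [|i]; first by rewrite ins0 /= ltnNge (ltnW xM) /= add0n leqnn leqnSn.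
rewrite insS.
case: t IH aM => [|y t'] IH aM; first by rewrite ins_nil /= xM.
case: i => [|i]; first by rewrite ins0 /= xM; move: (aM) => /= /andP[yM _]; rewrite [M < y]ltnNge (ltnW yM) /=; case: (x<y) => /=; lia.
rewrite insS /=.
have := IH i.+1 aM; rewrite insS /=.
case: (x < y) => /=; lia.
Qed.

Lemma count_iotaS (p : pred nat) n :
  count p (iota 0 n.+1) = p 0 + count (fun i => p i.+1) (iota 0 n).
Proof.
by rewrite /= -[1]/(1 + 0) iotaDl count_map.
Qed.

Lemma asc_cons2 x y t : asc (x :: y :: t) = (x < y) + asc (y :: t).
Proof. by []. Qed.

Lemma count_ins_eq M l : all (fun x => x < M) l ->
  count (fun i => asc (ins i M l) == asc l) (iota 0 (size l).+1) = (asc l).+1.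
Proof.
elim: l => [|x t IH]; first by [].
move=> /andP[xM aM].
have h0 : asc (ins 0 M (x :: t)) = asc (x :: t).
  by rewrite ins0 [LHS]/= ltnNge (ltnW xM).
rewrite count_iotaS h0 eqxx add1n; congr S.
have {}aM : all (fun x => x < M) t := aM.
rewrite [size _]/= count_iotaS.
under eq_count => i do rewrite insS.
rewrite insS ins0.
clear h0; case: t IH aM => [|y t'] IH aM; first by rewrite [iota 0 0]/= /= xM.
have := IH aM; rewrite count_iotaS ins0.
move: (aM) => /andP[yM _].
have -> : asc (M :: y :: t') = asc (y :: t') by rewrite [LHS]/= ltnNge (ltnW yM).
rewrite eqxx add1n => /succn_inj H.
have -> : asc [:: x, M & y :: t'] = (asc (y :: t')).+1 by rewrite [LHS]/= xM ltnNge (ltnW yM).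
rewrite (asc_cons2 x y t').
congr (_ + _); first by case: (x < y); rewrite ?add1n ?add0n ?eqxx // eqn_leq ltnn.
rewrite -[in RHS]H; apply: eq_count => i.
by rewrite insS asc_cons2 eqn_add2l.
Qed.

Lemma count_ins M l k : all (fun x => x < M) l ->
  count (fun i => asc (ins i M l) == k) (iota 0 (size l).+1) =
  (asc l == k) * (asc l).+1 + ((asc l).+1 == k) * (size l - asc l).
Proof.
move=> aM; have B := fun i => asc_ins_bound i aM.
have E := count_ins_eq aM.
case: (eqVneq (asc l) k) => [<-|ne1].
  rewrite E; have -> : ((asc l).+1 == asc l) = false by lia.
  by rewrite mul1n mul0n addn0.

case: (boolP ((asc l).+1 == k)) => [/eqP e|ne2]; first subst k.
  rewrite mul0n add0n mul1n.
  have := count_predC (fun i => asc (ins i M l) == asc l) (iota 0 (size l).+1).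
  rewrite E size_iota.
  have -> : count (predC (fun i => asc (ins i M l) == asc l)) (iota 0 (size l).+1)
     = count (fun i => asc (ins i M l) == (asc l).+1) (iota 0 (size l).+1).
    apply: eq_count => i /=; have := B i; lia.
  lia.
rewrite mul0n add0n mul0n; apply/eqP; rewrite -leqn0 leqn0 -/(nilp _) eqn0Ngt -has_count; apply/hasPn => i _ /=.
have := B i; move: ne1 ne2; lia.
Qed.

Fixpoint Perms (n : nat) : seq (seq nat) :=
  if n is n'.+1 then allpairs (fun l i => ins i n' l) (Perms n') (iota 0 n'.+1)
  else [:: [::]].

Lemma PermsS n : Perms n.+1 = allpairs (fun l i => ins i n l) (Perms n) (iota 0 n.+1).
Proof. by []. Qed.

Lemma perm_ins i M l : perm_eq (ins i M l) (M :: l).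
Proof.
rewrite /ins -cat1s perm_catCA /= perm_cons cat_take_drop //.
Qed.

Lemma iota_rcons n : perm_eq (iota 0 n.+1) (n :: iota 0 n).
Proof. by rewrite -addn1 iotaD add0n /= perm_catC. Qed.

Lemma Perms_perm n l : l \in Perms n -> perm_eq l (iota 0 n).
Proof.
elim: n l => [|n IH] l; first by rewrite inE => /eqP ->.
rewrite PermsS => /allpairsP[[l' i] [/= Hl' _ ->]].
apply: perm_trans (perm_ins _ _ _) _.
by rewrite perm_sym (perm_trans (iota_rcons n)) // perm_cons perm_sym IH.
Qed.

Lemma size_Perms n : size (Perms n) = n`!.
Proof. by elim: n => // n IH; rewrite PermsS size_allpairs IH size_iota factS mulnC. Qed.

Lemma index_ins i M l : M \notin l -> i <= size l -> index M (ins i M l) = i.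
Proof.
move=> Ml il; rewrite /ins index_cat.
have -> : (M \in take i l) = false.
  by apply/negbTE; apply: contra Ml; apply: mem_take.
by rewrite size_takel //= eqxx addn0.
Qed.

Lemma filter_ins i M l : M \notin l -> filter (predC1 M) (ins i M l) = l.
Proof.
move=> Ml; rewrite /ins filter_cat /= eqxx /= -filter_cat cat_take_drop.
apply/all_filterP/allP => x xl /=; apply/eqP => e; move: Ml; by rewrite -e xl.
Qed.

Lemma Perms_uniq n : uniq (Perms n).
Proof.
elim: n => // n IH.
rewrite PermsS; apply: allpairs_uniq => //; first exact: iota_uniq.
move=> [l i] [l' j] /flatten_mapP[a Ha /mapP[b Hb [-> ->]]] /flatten_mapP[a' Ha' /mapP[b' Hb' [-> ->]]] /= E.
have Pa := Perms_perm Ha; have Pa' := Perms_perm Ha'.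
have na : n \notin a by rewrite (perm_mem Pa) mem_iota ltnn andbF.
have na' : n \notin a' by rewrite (perm_mem Pa') mem_iota ltnn andbF.
have sa : size a = n by rewrite (perm_size Pa) size_iota.
have sa' : size a' = n by rewrite (perm_size Pa') size_iota.
move: Hb Hb'; rewrite !mem_iota !add0n /= => Hb Hb'.
have eb : b = b'.
  by rewrite -(index_ins na (_ : b <= size a)) ?sa // E index_ins // sa'.
have ea : a = a' by rewrite -(filter_ins b na) E filter_ins.
by rewrite ea eb.
Qed.

Lemma Perms_complete n l : perm_eq l (iota 0 n) -> l \in Perms n.
Proof.
elim: n l => [|n IH] l.
  by move=> /perm_size; rewrite size_iota /=; case: l.
move=> Pl.
have nl : n \in l by rewrite (perm_mem Pl) mem_iota ltnSn.
set i := index n l.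
have il : i < size l by rewrite index_mem.
set l' := take i l ++ drop i.+1 l.
have El : l = ins i n l'.
  rewrite /ins /l' take_size_cat ?size_takel ?(ltnW il) //.
  rewrite drop_size_cat ?size_takel ?(ltnW il) //.
  by rewrite -{1}(cat_take_drop i l) (drop_nth n il) nth_index.
rewrite PermsS; apply/allpairsP; exists (l', i) => /=; split => //.
  apply: IH; rewrite -(perm_cons n).
  apply: (perm_trans _ (iota_rcons n)); apply: (perm_trans _ Pl).
  by rewrite El perm_sym perm_ins.
rewrite -[0 :: _]/(iota 0 n.+1) mem_iota add0n.
by move: il; rewrite (perm_size Pl) size_iota.
Qed.

Definition Eul n k := count (fun l => asc l == k) (Perms n).

Lemma Eul_S n k : Eul n.+1 k =
  Eul n k * k.+1 + (if k is k'.+1 then Eul n k' * (n - k') else 0).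
Proof.
rewrite /Eul PermsS /allpairs count_flatten -map_comp.
have -> : [seq (count (fun l => asc l == k) \o (fun l => [seq ins i n l | i <- iota 0 n.+1])) l | l <- Perms n]
   = [seq (asc l == k) * (asc l).+1 + ((asc l).+1 == k) * (n - asc l) | l <- Perms n].
  apply/eq_in_map => l Hl.
  have P := Perms_perm Hl.
  have sl : size l = n by rewrite (perm_size P) size_iota.
  have A : all (fun x => x < n) l by apply/allP => x; rewrite (perm_mem P) mem_iota.
  have := count_ins k A; rewrite sl => <-.
  by rewrite /comp count_map.
elim: (Perms n) => [|l s IH]; first by case: k.
rewrite /= IH; case: k {IH} => [|k]; case: (asc l) => [|a] /=; try lia.
Qed.

Lemma Eul0 k : Eul 0 k = (k == 0).
Proof. by rewrite /Eul /=; case: k. Qed.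

Lemma asc_nth l : asc l =
  count (fun i => (i.+1 < size l) && (nth 0 l i < nth 0 l i.+1)) (iota 0 (size l)).
Proof.
elim: l => [|x t IH] //.
rewrite [size _]/= count_iotaS [asc _]/= IH; congr (_ + _).
  by case: t {IH} => [|y t] //=.
Qed.

Section Link.
Variable n : nat.

Definition fS (s : 'S_n) : seq nat := [seq val (s i) | i <- enum 'I_n].

Lemma size_fS s : size (fS s) = n.
Proof. by rewrite size_map size_enum_ord. Qed.

Lemma nth_fS s (i : 'I_n) : nth 0 (fS s) i = val (s i).
Proof. by rewrite (nth_map i) ?size_enum_ord // nth_ord_enum. Qed.

Lemma fS_inj : injective fS.
Proof.
move=> s t E; apply/permP => i; apply: val_inj.
by rewrite -!nth_fS E.
Qed.

Lemma fS_perm s : perm_eq (fS s) (iota 0 n).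
Proof.
have -> : fS s = map val (map s (enum 'I_n)) by rewrite -map_comp.
rewrite -val_enum_ord; apply: perm_map.
apply: uniq_perm; first by rewrite map_inj_uniq ?enum_uniq //; exact: perm_inj.
  exact: enum_uniq.
move=> x; rewrite mem_enum; apply/mapP; exists (s^-1 x)%g; first by rewrite mem_enum.
by rewrite permKV.
Qed.

Lemma ascents_fS s : ascents s = asc (fS s).
Proof.
rewrite /ascents cardE /enum_mem size_filter -enumT asc_nth size_fS.
rewrite -val_enum_ord count_map; apply: eq_count => i /=; rewrite inE.
apply/existsP/idP => [[j /andP[/eqP ej sij]]|/andP[lt hi]].
  rewrite -ej ltn_ord /= nth_fS.
  by rewrite nth_fS.
exists (Ordinal lt); rewrite eqxx /=.
by rewrite -!nth_fS.
Qed.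

End Link.

Lemma eulerian_Eul n k : eulerian n k = Eul n k.
Proof.
rewrite /eulerian cardE /enum_mem size_filter -enumT.
have -> : count (mem [set s : 'S_n | ascents s == k]) (enum 'S_n) =
          count (fun l => asc l == k) (map (@fS n) (enum 'S_n)).
  by rewrite count_map; apply: eq_count => s; rewrite /= inE ascents_fS.
rewrite /Eul.
suff P : perm_eq (map (@fS n) (enum 'S_n)) (Perms n) by move/seq.permP: P => ->.
have U1 : uniq (map (@fS n) (enum 'S_n)) by rewrite map_inj_uniq ?enum_uniq //; exact: fS_inj.
apply: uniq_perm => //; first exact: Perms_uniq.
have Hs : {subset map (@fS n) (enum 'S_n) <= Perms n}.
  by move=> l /mapP[s _ ->]; apply: Perms_complete; apply: fS_perm.
have Hz : size (Perms n) <= size (map (@fS n) (enum 'S_n)).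
  by rewrite size_Perms size_map -cardE card_Sn.
by have [_ E] := uniq_min_size U1 Hs Hz.
Qed.

Lemma Eul_big n k : n < k -> Eul n k = 0.
Proof.
elim: n k => [|n IH] k lt; first by rewrite Eul0; case: k lt.
case: k lt => [|k] // lt; rewrite Eul_S IH ?(IH k) //; lia.
Qed.

Lemma Eul_0 n : Eul n 0 = 1.
Proof. by elim: n => [|n IH]; rewrite ?Eul0 // Eul_S IH. Qed.

Close Scope nat_scope.
Delimit Scope R_scope with R.

Lemma eul_00 : INR (eulerian 0 0) = 1%R.
Proof. by rewrite eulerian_Eul Eul0. Qed.

Lemma eul_0S k : INR (eulerian 0 k.+1) = 0%R.
Proof. by rewrite eulerian_Eul Eul0. Qed.

Lemma eul_S0 n : INR (eulerian n.+1 0) = INR (eulerian n 0).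
Proof. by rewrite !eulerian_Eul Eul_S muln1 addn0. Qed.

Lemma eul_SS n k : INR (eulerian n.+1 k.+1) =
  ((INR k + 2) * INR (eulerian n k.+1) + (INR n - INR k) * INR (eulerian n k))%R.
Proof.
rewrite !eulerian_Eul Eul_S.
case: (leqP k n) => [le|lt].
- rewrite -plusE -!multE -minusE plus_INR !mult_INR minus_INR; last by apply/leP.
  rewrite !S_INR. ring.
- rewrite (Eul_big lt) mul0n addn0 -multE mult_INR !S_INR. change (INR O) with 0%R. ring.
Qed.

Theorem mainTheorem6 :
  (forall k : nat,
     ex_series (fun n : nat => ((-1) ^ n / INR (fact n) * INR (eulerian n k))%R)) /\
  is_lim_seq
    (fun k : nat => Series (fun n : nat => ((-1) ^ n / INR (fact n) * INR (eulerian n k))%R))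
    0%R.
Proof.
exact (abstract_main (fun n k => INR (eulerian n k)) eul_00 eul_0S eul_S0 eul_SS).
Qed.
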